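(* Let $C\subseteq\{0,1\}^n$ be a maximum class with corner-peeling ordering $v_1,\dots,v_{|C|}$, and let $r(v_t)$ be the set of colors of the edges incident to $v_t$ in $\Gamma(C_{t-1})$ (the corner-peeling unlabeled compression scheme). Orient each edge of $\Gamma(C)$ of color $i$ away from its endpoint $u$ with $i\in r(u)$. Then the resulting directed graph has no directed cycle, i.e., every corner-peeling unlabeled compression scheme is acyclic.
   Context: For $C\subseteq\{0,1\}^n$, $C$ is maximum if $|C|=\sum_{i=0}^{\mathrm{VC}(C)}\binom{n}{i}$, where $\mathrm{VC}(C)$ is the VC-dimension. The one-inclusion graph $\Gamma(C)$ has vertex set $C$, with an edge between vertices differing in exactly one coordinate, colored by that coordinate. A $k$-cube in $C$ is a set of $2^k$ points of $C$ agreeing outside some $k$ coordinates and taking all values on them. A corner-peeling ordering is an ordering $v_1,\dots,v_{|C|}$ of $C$ such that, with $C_0=C$ and $C_t=C_{t-1}\setminus\{v_t\}$, for each $t$ there is a unique cube $C'_{t-1}$ of maximum dimension among cubes in $C_{t-1}$ containing $v_t$, and all neighbours of $v_t$ in $\Gamma(C_{t-1})$ lie in $C'_{t-1}$. *)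

(* Defs.v *)
From mathcomp Require Import all_boot.
Set Implicit Arguments. Unset Strict Implicit. Unset Printing Implicit Defensive.

Section Defs.
Variable n : nat.

Definition pt := {ffun 'I_n -> bool}.

Definition shattered (C : {set pt}) (S : {set 'I_n}) : bool :=
  [forall g : pt, [exists c in C, [forall i in S, c i == g i]]].

Definition VCdim (C : {set pt}) : nat :=
  \max_(S : {set 'I_n} | shattered C S) #|S|.

Definition maximum (C : {set pt}) : bool :=
  #|C| == \sum_(i < (VCdim C).+1) 'C(n, i).

(* x and y form an edge of the one-inclusion graph of colour i *)
Definition edge_col (x y : pt) (i : 'I_n) : bool :=
  [set j | x j != y j] == [set i].

Definition subcube (x : pt) (K : {set 'I_n}) : {set pt} :=
  [set y : pt | [forall i in ~: K, y i == x i]].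

Definition is_cube (D Q : {set pt}) (K : {set 'I_n}) : bool :=
  (Q \subset D) && [exists x : pt, Q == subcube x K].

Definition corner_step (D : {set pt}) (v : pt) : Prop :=
  exists (Q : {set pt}) (K : {set 'I_n}),
    [/\ is_cube D Q K, v \in Q,
        (forall Q' K', is_cube D Q' K' -> v \in Q' ->
           #|K'| <= #|K| /\ (#|K'| = #|K| -> Q' = Q))
      & (forall w i, w \in D -> edge_col v w i -> w \in Q)].

Definition remaining (C : {set pt}) (s : seq pt) (t : nat) : {set pt} :=
  C :\: [set x in take t s].

Definition pt0 : pt := [ffun => false].

Definition corner_peeling (C : {set pt}) (s : seq pt) : Prop :=
  perm_eq s (enum C) /\
  forall t, t < size s -> corner_step (remaining C s t) (nth pt0 s t).

Definition rcols (D : {set pt}) (v : pt) : {set 'I_n} :=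
  [set i | [exists w in D, edge_col v w i]].

(* r(u) for u = v_t : computed in C_{t-1} *)
Definition r_of (C : {set pt}) (s : seq pt) (u : pt) : {set 'I_n} :=
  rcols (remaining C s (index u s)) u.

Definition orient_arc (C : {set pt}) (s : seq pt) (u w : pt) : bool :=
  [&& u \in C, w \in C & [exists i, edge_col u w i && (i \in r_of C s u)]].

End Defs.

(* Main.v *)
Require Import Defs.
From mathcomp Require Import all_boot.
From mathcomp Require Import zify.

Lemma edge_col_uniq n (u w w' : pt n) i :
  edge_col u w i -> edge_col u w' i -> w = w'.
Proof.
rewrite /edge_col => /eqP H1 /eqP H2; apply/ffunP => j.
have E1 : (j \in [set j | u j != w j]) = (j \in [set i]) by rewrite H1.
have E2 : (j \in [set j | u j != w' j]) = (j \in [set i]) by rewrite H2.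
move: E1 E2; rewrite !inE.
by case: (u j); case: (w j); case: (w' j); case: (j == i).
Qed.

Lemma edge_col_neq n (u w : pt n) i : edge_col u w i -> u != w.
Proof.
apply: contraTneq => ->; rewrite /edge_col.
apply/negP => /eqP H.
have : (i \in [set j | w j != w j]) = (i \in [set i]) by rewrite H.
by rewrite !inE !eqxx.
Qed.

Lemma arc_lt n (C : {set pt n}) s u w :
  perm_eq s (enum C) -> orient_arc C s u w -> index u s < index w s.
Proof.
move=> Hp /and3P [uC wC /existsP [i /andP [Huw]]].
rewrite /r_of /rcols inE => /existsP [w' /andP [Hw' Huw']].
have ew := @edge_col_uniq _ _ _ _ _ Huw' Huw; subst w'.
have us : u \in s by rewrite (perm_mem Hp) mem_enum.
have ws : w \in s by rewrite (perm_mem Hp) mem_enum.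
move: Hw'; rewrite /remaining !inE => /andP [Hnt _].
rewrite ltn_neqAle; apply/andP; split.
  apply/negP => /eqP E.
  have : nth u s (index u s) = nth u s (index w s) by rewrite E.
  rewrite !nth_index // => E'.
  by move: (@edge_col_neq _ _ _ _ Huw); rewrite E' eqxx.
rewrite leqNgt; apply/negP => Hlt.
apply/negP: Hnt; rewrite negbK.
have Hsz : index w s < size (take (index u s) s).
  by rewrite size_take; case: ifP => // _; apply: (leq_trans Hlt); rewrite index_size.
by rewrite -(nth_index u ws) -(nth_take u Hlt); apply: mem_nth.
Qed.

Lemma path_lt (T : Type) (e : rel T) (f : T -> nat) :
  (forall a b, e a b -> f a < f b) ->
  forall p x, path e x p -> f x + size p <= f (last x p).
Proof.
move=> He; elim=> [|y q IH] x /=; first by rewrite addn0.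
move=> /andP [Hxy Hq]; have := IH _ Hq; have := He _ _ Hxy; lia.
Qed.

Theorem proposition1 (n : nat) (C : {set pt n}) (s : seq (pt n)) :
  maximum C -> corner_peeling C s ->
  forall (x : pt n) (p : seq (pt n)), ~~ cycle (orient_arc C s) (x :: p).
Proof.
move=> _ [Hp _] x p; apply/negP; rewrite /cycle => Hc.
have := @path_lt _ _ _ (fun a b => @arc_lt n C s a b Hp) _ _ Hc.
by rewrite last_rcons size_rcons; lia.
Qed.
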